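(* Let $G = (V,E)$ be an unweighted graph with $n$ vertices, let $A_1,\ldots,A_p$ be non-empty subsets of $V$, and let $\ell, \delta \in \mathbb{N}$. Then either (1) there is a tree $T$ in $G$ of depth at most $4\delta\ell\ln n$ and with at most $4\delta\ell p \ln n$ vertices such that $V(T)\cap A_i \neq \emptyset$ for $i = 1,\ldots,p$; or (2) there is a set $S \subset V$ such that (a) $|N^\delta(S)\cap (V\setminus S)| < \min\{|S|,|V\setminus S|\}/\ell$ and (b) $|N^\delta(V\setminus S)\cap S| < \min\{|S|,|V\setminus S|\}/\ell$.
   Context: For $X\subseteq V$, $N(X)$ denotes the set of vertices at distance at most $1$ from $X$ in $G$ (so $X \subseteq N(X)$); $N^1(X) = N(X)$ and $N^\delta(X) = N(N^{\delta-1}(X))$ for $\delta \ge 2$. *)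

(* Defs.v *)
From mathcomp Require Import all_boot.
From Stdlib Require Import Reals.

Set Implicit Arguments.
Unset Strict Implicit.
Unset Printing Implicit Defensive.

Definition simple_graph (V : finType) (e : rel V) : Prop :=
  symmetric e /\ irreflexive e.

(* N(X): vertices at distance at most 1 from X (so X \subset N X). *)
Definition nbhd (V : finType) (e : rel V) (X : {set V}) : {set V} :=
  [set y | [exists x in X, (x == y) || e x y]].

Definition nbhd_iter (V : finType) (e : rel V) (d : nat) (X : {set V}) : {set V} :=
  iter d (nbhd e) X.

Definition tadj (V : finType) (ET : {set {set V}}) : rel V :=
  fun x y => (x != y) && ([set x; y] \in ET).

Definition subgraph_of (V : finType) (e : rel V) (VT : {set V}) (ET : {set {set V}}) : Prop :=
  forall E, E \in ET -> exists x y, [/\ x != y, E = [set x; y], e x y, x \in VT & y \in VT].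

Definition is_tree (V : finType) (VT : {set V}) (ET : {set {set V}}) : Prop :=
  [/\ VT != set0,
      (forall x y, x \in VT -> y \in VT -> connect (tadj ET) x y) &
      (forall c : seq V, uniq c -> 3 <= size c -> ~~ cycle (tadj ET) c)].

Definition tree_depth_le (V : finType) (VT : {set V}) (ET : {set {set V}}) (d : R) : Prop :=
  exists2 r, r \in VT &
    forall v, v \in VT -> exists s : seq V,
      [/\ path (tadj ET) r s, last r s = v & (INR (size s) <= d)%R].

(* Main.v *)
Require Import Defs.
From mathcomp Require Import all_boot zify.
From Stdlib Require Import Reals Lra Classical.

Set Implicit Arguments.
Unset Strict Implicit.
Unset Printing Implicit Defensive.


Lemma nbhdP (V : finType) (e : rel V) (X : {set V}) y :
  reflect (exists2 x, x \in X & (x == y) || e x y) (y \in nbhd e X).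
Proof. rewrite /nbhd inE; exact: (iffP exists_inP). Qed.

Lemma sub_nbhd (V : finType) (e : rel V) (X : {set V}) : X \subset nbhd e X.
Proof. apply/subsetP => x Hx; apply/nbhdP; exists x => //; by rewrite eqxx. Qed.

Lemma nbhd_mono (V : finType) (e : rel V) (X Y : {set V}) :
  X \subset Y -> nbhd e X \subset nbhd e Y.
Proof.
move=> /subsetP sXY; apply/subsetP => y /nbhdP [x Hx H]; apply/nbhdP; exists x => //.
exact: sXY.
Qed.

Lemma Nk_mono (V : finType) (e : rel V) k (X Y : {set V}) :
  X \subset Y -> nbhd_iter e k X \subset nbhd_iter e k Y.
Proof. elim: k => [|k IH] //= H; exact: nbhd_mono (IH H). Qed.

Lemma Nk_sub (V : finType) (e : rel V) k (X : {set V}) :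
  X \subset nbhd_iter e k X.
Proof.
elim: k => [|k IH] //=; exact: subset_trans IH (sub_nbhd _ _).
Qed.

Lemma Nk_add (V : finType) (e : rel V) k m (X : {set V}) :
  nbhd_iter e (k + m) X = nbhd_iter e k (nbhd_iter e m X).
Proof. by rewrite /nbhd_iter iterD. Qed.

Lemma Nk_le (V : finType) (e : rel V) k m (X : {set V}) :
  k <= m -> nbhd_iter e k X \subset nbhd_iter e m X.
Proof.
move=> km; rewrite -(subnK km) Nk_add; exact: Nk_sub.
Qed.

Lemma Nk_S (V : finType) (e : rel V) k (X : {set V}) :
  nbhd_iter e k.+1 X = nbhd e (nbhd_iter e k X).
Proof. by []. Qed.

Lemma Nk_Sr (V : finType) (e : rel V) k (X : {set V}) :
  nbhd_iter e k.+1 X = nbhd_iter e k (nbhd e X).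
Proof. by rewrite -addn1 Nk_add. Qed.

Lemma Nk_split (V : finType) (e : rel V) k (X : {set V}) y :
  y \in nbhd_iter e k X -> exists2 x, x \in X & y \in nbhd_iter e k [set x].
Proof.
elim: k y => [|k IH] y /=.
  by move=> Hy; exists y => //; rewrite in_set1.
move/nbhdP => [z /IH [x Hx Hz] Hzy]; exists x => //; apply/nbhdP; by exists z.
Qed.

Lemma Nk_sym (V : finType) (e : rel V) k x y :
  symmetric e ->
  y \in nbhd_iter e k [set x] -> x \in nbhd_iter e k [set y].
Proof.
move=> se; elim: k x y => [|k IH] x y.
  by rewrite /nbhd_iter /= !in_set1 eq_sym.
rewrite Nk_S => /nbhdP [z /IH Hz Hzy].
rewrite Nk_Sr.
apply: (subsetP (@Nk_mono _ e k [set z] _ _)) Hz.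
rewrite sub1set; apply/nbhdP; exists y; first by rewrite in_set1.
by rewrite eq_sym se.
Qed.

Lemma inner_sub (V : finType) (e : rel V) d (S P : {set V}) :
  symmetric e -> nbhd_iter e d P \subset S ->
  nbhd_iter e d (~: S) :&: S \subset S :\: P.
Proof.
move=> se sPS; apply/subsetP => y; rewrite !inE => /andP [Hy yS].
rewrite yS andbT; apply/negP => yP.
have [x xS Hx] := Nk_split Hy.
have := Nk_sym se Hx => Hx'.
have : x \in nbhd_iter e d P.
  apply: (subsetP (@Nk_mono _ e d [set y] _ _)) Hx'; by rewrite sub1set.
move/(subsetP sPS); by rewrite inE in xS; move/negP: xS.
Qed.


Lemma le_INR' m n : m <= n -> (INR m <= INR n)%R.
Proof. by move/leP; apply: le_INR. Qed.

Lemma growth (a : nat -> nat) (l : nat) (c : R) (M : nat) :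
  (1 <= c)%R -> (c <= 2)%R -> (INR l * c <= INR l + 1)%R ->
  ((INR l - 1) * (c*c) <= INR l)%R -> 1 <= l ->
  a 0 = 1 -> 2 <= a 1 -> (forall j, a j <= a j.+1) ->
  (forall j, 1 <= j -> j < M ->
     (INR (a j) <= INR l * (INR (a j.+1) - INR (a j)))%R \/
     (INR (a j) <= INR l * (INR (a j) - INR (a j.-1)))%R) ->
  forall m, m <= M -> (c ^ m <= INR (a m))%R.
Proof.
move=> c1 c2 cl cl2 l1 a0 a1 amono Hc.
have lpos : (1 <= INR l)%R by have := le_INR' l1.
have apos : forall j, (0 <= INR (a j))%R by move=> j; apply: pos_INR.
have amonoR : forall j, (INR (a j) <= INR (a j.+1))%R by move=> j; apply: le_INR'.
suff H : forall m, (m <= M -> (c ^ m <= INR (a m))%R) /\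
                   (m.+1 <= M -> (c ^ m.+1 <= INR (a m.+1))%R).
  by move=> m; case: (H m).
elim=> [|m [IH1 IH2]].
  split=> _; first by rewrite a0 /=; lra.
  have := le_INR' a1; rewrite /= => h; lra.
split=> // HM.
have jM : m.+1 < M by [].
have [F|B] := Hc m.+1 isT jM.
- have h1 := IH2 (ltnW HM).
  have h2 : (c * INR (a m.+1) <= INR (a m.+2))%R.
    have : (INR l * (c * INR (a m.+1)) <= INR l * INR (a m.+2))%R.
      have := Rmult_le_compat_r _ _ _ (apos m.+1) cl. lra.
    move=> h; apply: (Rmult_le_reg_l (INR l)); lra.
  have h4 : (c ^ m.+2 = c * c ^ m.+1)%R by [].
  rewrite h4.
  have : (c * c ^ m.+1 <= c * INR (a m.+1))%R by apply: Rmult_le_compat_l; lra.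
  lra.
- rewrite /= in B.
  have h0 := IH1 (ltnW (ltnW HM)).
  have h1 : (INR l * INR (a m) <= (INR l - 1) * INR (a m.+1))%R by lra.
  have h2 : (c * c * INR (a m) <= INR (a m.+1))%R.
    have : (INR l * (c * c * INR (a m)) <= INR l * INR (a m.+1))%R.
      have cc : (0 <= c * c)%R by nra.
      have := Rmult_le_compat_l _ _ _ cc h1.
      have : ((INR l - 1) * (c*c) * INR (a m.+1) <= INR l * INR (a m.+1))%R.
        by apply: Rmult_le_compat_r.
      nra.
    move=> h; apply: (Rmult_le_reg_l (INR l)); lra.
  have h3 := amonoR m.+1.
  have h4 : (c ^ m.+2 = c * c * c ^ m)%R by rewrite /=; ring.
  rewrite h4.
  have : (c * c * c ^ m <= c * c * INR (a m))%R.
    apply: Rmult_le_compat_l; nra.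
  lra.
Qed.


Lemma exp_le_inv' x y : (exp x <= exp y)%R -> (x <= y)%R.
Proof.
move=> H; case: (Rle_lt_dec x y) => // /exp_increasing; lra.
Qed.

Lemma exp_powk k x : exp (INR k * x) = (exp x ^ k)%R.
Proof.
elim: k => [|k IH]; first by rewrite /= Rmult_0_l exp_0.
rewrite S_INR Rmult_plus_distr_r Rmult_1_l exp_plus IH /=; ring.
Qed.

Lemma ln2_ge : (2/3 <= ln 2)%R.
Proof.
have h1 : (exp (1/24) <= 24/23)%R.
  have := exp_ineq1_le (-(1/24)).
  have e : (exp (1/24) * exp (-(1/24)) = 1)%R by rewrite -exp_plus Rplus_opp_r exp_0.
  have := exp_pos (1/24); have := exp_pos (-(1/24)); nra.
have h2 : (exp (2/3) <= 2)%R.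
  have -> : (2/3 = INR 16 * (1/24))%R by rewrite /=; field.
  rewrite exp_powk.
  have p0 : (0 <= exp (1/24))%R by have := exp_pos (1/24); lra.
  have : (exp (1 / 24) ^ 16 <= (24/23) ^ 16)%R by apply: pow_incr.
  simpl; lra.
apply: exp_le_inv'; rewrite exp_ln //; lra.
Qed.

Lemma ln_ge_exp a x : (0 < x)%R -> (exp a <= x)%R -> (a <= ln x)%R.
Proof. by move=> x0 H; apply: exp_le_inv'; rewrite exp_ln. Qed.

Definition cc (l : nat) : R := if l == 1 then 2%R else exp (/ (2 * INR l)).

Lemma INR_ge2 l : 2 <= l -> (2 <= INR l)%R.
Proof. by move/leP/le_INR. Qed.

Lemma cc_props l : 1 <= l ->
  [/\ (1 <= cc l)%R, (cc l <= 2)%R, (INR l * cc l <= INR l + 1)%R &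
   ((INR l - 1) * (cc l * cc l) <= INR l)%R].
Proof.
rewrite /cc; case: eqP => [->|/eqP l1 l0].
  by rewrite /=; split; lra.
have l2 : 2 <= l by rewrite ltn_neqAle eq_sym l1.
have L := INR_ge2 l2.
set y := (/ (2 * INR l))%R.
have y0 : (0 < y)%R by rewrite /y; apply: Rinv_0_lt_compat; lra.
have yl : (y * (2 * INR l) = 1)%R by rewrite /y; field; lra.
have ey : (exp y * (1 - y) <= 1)%R.
  have := exp_ineq1_le (- y).
  have e : (exp y * exp (- y) = 1)%R by rewrite -exp_plus Rplus_opp_r exp_0.
  have := exp_pos y; nra.
have ey1 : (1 <= exp y)%R by have := exp_ineq1_le y; lra.
have ey2 : (exp y * exp y * (1 - 2 * y) <= 1)%R.
  have := exp_ineq1_le (-(2*y)).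
  have e : (exp y * exp y * exp (-(2*y)) = 1)%R.
    rewrite -!exp_plus; have -> : (y + y + - (2*y) = 0)%R by ring.
    by rewrite exp_0.
  have := exp_pos y; nra.
have eyl : (exp y <= 1 + / INR l)%R.
  have : (exp y * (1 - y) * (2 * INR l) <= 2 * INR l)%R by nra.
  have -> : (exp y * (1 - y) * (2 * INR l) = exp y * (2 * INR l - 1))%R.
    have : (y * (2 * INR l) = 1)%R by []. nra.
  move=> H.
  have : (exp y * (2 * INR l - 1) * INR l <= (1 + / INR l) * (2 * INR l - 1) * INR l)%R.
    have -> : ((1 + / INR l) * (2 * INR l - 1) * INR l = (2 * INR l - 1) * (INR l + 1))%R.
      field; lra.
    nra.
  move=> H2.
  apply: (Rmult_le_reg_r ((2 * INR l - 1) * INR l)); first nra.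
  nra.
have linv : (INR l * / INR l = 1)%R by field; lra.
split.
- lra.
- have : (/ INR l <= 1/2)%R.
    apply: (Rmult_le_reg_r (INR l)); first lra.
    rewrite Rinv_l; lra.
  lra.
- have : (INR l * exp y <= INR l * (1 + / INR l))%R by apply: Rmult_le_compat_l; lra.
  nra.
- have hy : (1 - 2 * y = (INR l - 1) / INR l)%R by rewrite /y; field; lra.
  rewrite hy in ey2.
  have : (exp y * exp y * ((INR l - 1) / INR l) * INR l <= INR l)%R by nra.
  have -> : (exp y * exp y * ((INR l - 1) / INR l) * INR l = (INR l - 1) * (exp y * exp y))%R.
    field; lra.
  done.
Qed.

Lemma pow_ln y k X : (0 < X)%R -> (exp y ^ k * 2 <= X)%R -> (INR k * y + ln 2 <= ln X)%R.
Proof.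
move=> X0 H; apply: ln_ge_exp => //.
by rewrite exp_plus exp_ln ?exp_powk; lra.
Qed.

Lemma INR_pred h : 1 <= h -> INR h = (INR h.-1 + 1)%R.
Proof. by case: h => // h _; rewrite S_INR. Qed.

Lemma num_bound n l h g : 2 <= n -> 1 <= l -> 1 <= h ->
  (cc l ^ h.-1 * 2 <= INR n)%R ->
  (g = 0 \/ (1 <= g /\ (cc l ^ g.-1 * 2 <= INR n - 1)%R)) ->
  (INR (h + g) + 1 <= 4 * INR l * ln (INR n))%R.
Proof.
move=> n2 l1 h1 Hh Hg.
have L2 := ln2_ge.
have N2 : (2 <= INR n)%R by apply: INR_ge2.
have lnn : (ln 2 <= ln (INR n))%R.
  case: (Req_dec (INR n) 2) => [->|ne]; first lra.
  apply: Rlt_le; apply: ln_increasing; lra.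
have Hh' := INR_pred h1.
rewrite plus_INR.
rewrite /cc in Hh Hg; case: eqP => [l1'|/eqP ln1] in Hh Hg *.
- have E1 : INR l = 1%R by rewrite l1'.
  rewrite E1.
  have e2 : (2 = exp (ln 2))%R by rewrite exp_ln; lra.
  have Hh2 : (exp (ln 2) ^ h.-1 * 2 <= INR n)%R by rewrite exp_ln //; lra.
  have Ah := pow_ln (ltac:(lra) : (0 < INR n)%R) Hh2.
  have Ah2 : (INR h * (2/3) <= ln (INR n))%R.
    have := pos_INR h.-1; nra.
  case: Hg => [->|[g1 Hg]].
    rewrite /=; lra.
  have P1 : (1 <= 2 ^ g.-1)%R by apply: pow_R1_Rle; lra.
  have n1 : (0 < INR n - 1)%R by nra.
  have Hg2 : (exp (ln 2) ^ g.-1 * 2 <= INR n - 1)%R by rewrite exp_ln //; lra.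
  have Ag := pow_ln n1 Hg2.
  have Hg' := INR_pred g1.
  have lnn1 : (ln (INR n - 1) <= ln (INR n))%R by apply: Rlt_le; apply: ln_increasing; lra.
  have Ag2 : (INR g * (2/3) <= ln (INR n))%R by have := pos_INR g.-1; nra.
  have n3 : (3 <= INR n)%R by nra.
  have ln3 : (1 <= ln (INR n))%R.
    apply: ln_ge_exp; first lra. have := exp_le_3; lra.
  lra.
- have l2 : 2 <= l by rewrite ltn_neqAle eq_sym ln1.
  have L := INR_ge2 l2.
  set y := (/ (2 * INR l))%R in Hh Hg.
  have y0 : (0 < y)%R by rewrite /y; apply: Rinv_0_lt_compat; lra.
  have yl : (y * (2 * INR l) = 1)%R by rewrite /y; field; lra.
  have Ah := pow_ln (ltac:(lra) : (0 < INR n)%R) Hh.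
  have Ah2 : (INR h.-1 <= 2 * INR l * (ln (INR n) - ln 2))%R.
    have : (INR h.-1 * y * (2 * INR l) <= (ln (INR n) - ln 2) * (2 * INR l))%R.
      apply: Rmult_le_compat_r; lra.
    nra.
  case: Hg => [->|[g1 Hg]].
    rewrite /=; nra.
  have n1 : (0 < INR n - 1)%R by lra.
  have Ag := pow_ln n1 Hg.
  have lnn1 : (ln (INR n - 1) <= ln (INR n))%R by apply: Rlt_le; apply: ln_increasing; lra.
  have Ag2 : (INR g.-1 <= 2 * INR l * (ln (INR n) - ln 2))%R.
    have : (INR g.-1 * y * (2 * INR l) <= (ln (INR n) - ln 2) * (2 * INR l))%R.
      apply: Rmult_le_compat_r; lra.
    nra.
  have Hg' := INR_pred g1.
  nra.
Qed.

Lemma next_neq_prev (T : eqType) (c : seq T) x :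
  uniq c -> x \in c -> 3 <= size c -> next c x != prev c x.
Proof.
move=> uc xc sc.
rewrite -(next_rot (index x c) uc) -(prev_rot (index x c) uc).
have uc' : uniq (rot (index x c) c) by rewrite rot_uniq.
have sc' : 3 <= size (rot (index x c) c) by rewrite size_rot.
move: uc' sc'; rewrite (rot_index xc).
set t := drop _ _ ++ take _ _.
case: t => [|a [|b t']] // U _.
move: (U); rewrite cons_uniq => /andP [xnot U2].
move: (U2); rewrite cons_uniq => /andP [anot _].
rewrite next_nth prev_nth mem_head (memNindex xnot).
rewrite [index _ _]/= eqxx [nth _ _ _]/=.
apply/eqP => E; move/negP: anot; apply; rewrite E.
rewrite [size _]/= [nth _ _ _]/=; exact: mem_nth.
Qed.

Lemma card_bigcup_le (V : finType) (I : Type) (r : seq I) (P : pred I) (F : I -> {set V}) :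
  #|\big[@setU V/set0]_(i <- r | P i) F i| <= \sum_(i <- r | P i) #|F i|.
Proof.
elim: r => [|a r IH]; first by rewrite !big_nil cards0.
rewrite !big_cons; case: (P a) => //.
rewrite cardsU; apply: leq_trans (leq_subr _ _) _.
by rewrite leq_add2l.
Qed.

Lemma predn_neq n : 0 < n -> n.-1 = n -> False.
Proof. by move=> n0 E; have := ltn_predL n; rewrite E ltnn n0. Qed.

Lemma tree_exists (V : finType) (e : rel V) (p K : nat) (v : V) (t : 'I_p -> V) :
  symmetric e -> irreflexive e -> 0 < p ->
  (forall i, t i \in nbhd_iter e K [set v]) ->
  exists VT ET, [/\ subgraph_of e VT ET, is_tree VT ET,
     (v \in VT /\ forall w, w \in VT -> exists s, [/\ path (tadj ET) v s, last v s = w & size s <= K]),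
     #|VT| <= 1 + p * K & forall i, t i \in VT].
Proof.
move=> se ie p0 Ht.
pose Nv k := nbhd_iter e k [set v].
pose R := Nv K.
pose f w := find (fun k => w \in Nv k) (iota 0 K.+1).
have fR : forall w, w \in R -> f w <= K /\ w \in Nv (f w).
  move=> w wR.
  have hs : has (fun k => w \in Nv k) (iota 0 K.+1).
    apply/hasP; exists K; last exact: wR. by rewrite mem_iota add0n ltnS leqnn.
  have := hs; rewrite has_find size_iota => lt.
  split; first by [].
  have := nth_find 0 hs; rewrite nth_iota // add0n.
have fmin : forall w k, k <= K -> w \in Nv k -> f w <= k.
  move=> w k kK wk; rewrite leqNgt; apply/negP => lt.
  have := before_find 0 lt; rewrite nth_iota ?wk //.
have inR : forall w k, k <= K -> w \in Nv k -> w \in R.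
  move=> w k kK wk; exact: (subsetP (Nk_le _ _ kK)).
have f0 : forall w, w \in R -> f w = 0 -> w = v.
  move=> w wR fw; have [_] := fR w wR; rewrite fw /Nv /nbhd_iter /= in_set1.
  by move/eqP.
have fv : f v = 0.
  apply/eqP; rewrite -leqn0; apply: (fmin) => //; by rewrite /Nv /nbhd_iter /= in_set1.
pose par w := odflt w [pick z | (z \in R) && (f z == (f w).-1) && e z w].
have par_spec : forall w, w \in R -> 0 < f w ->
    [/\ par w \in R, f (par w) = (f w).-1 & e (par w) w].
  move=> w wR fw0.
  have [fwK wN] := fR w wR.
  have ex : exists z, (z \in R) && (f z == (f w).-1) && e z w.
    move: wN; rewrite -(prednK fw0) /Nv Nk_S => /nbhdP [z zN Hz].
    have wnot : w \notin Nv (f w).-1.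
      apply/negP => H; have := fmin w (f w).-1; rewrite (leq_trans (leq_pred _) fwK).
      by move/(_ isT H); rewrite leqNgt ltn_predL fw0.
    have zw : z != w by apply/eqP => E; move: zN; rewrite E => zN; exact: (negP wnot zN).
    move: Hz; rewrite (negbTE zw) /= => ezw.
    have zR : z \in R.
      apply: (inR z (f w).-1) => //; exact: leq_trans (leq_pred _) fwK.
    exists z; rewrite zR ezw andbT /=.
    have [fzK zNz] := fR z zR.
    have fz1 : f z <= (f w).-1 by apply: (fmin) => //; exact: leq_trans (leq_pred _) fwK.
    have fzK' : (f z).+1 <= K.
      apply: leq_trans fwK; by rewrite -(prednK fw0) ltnS.
    rewrite eqn_leq fz1 /=.
    have : f w <= (f z).+1.
      apply: (fmin) => //.
      rewrite /Nv Nk_S; apply/nbhdP; exists z => //; by rewrite ezw orbT.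
    by rewrite -subn1 leq_subLR add1n.
  rewrite /par; case: pickP => [z /andP [/andP [zR /eqP fz] ezw]|none] /=.
    by split.
  by case: ex => z; rewrite none.
have iter_spec : forall w, w \in R -> forall m, m <= f w ->
    iter m par w \in R /\ f (iter m par w) = f w - m.
  move=> w wR; elim=> [|m IH] lt; first by rewrite subn0.
  have [xR fx] := IH (ltnW lt).
  have fx0 : 0 < f (iter m par w) by rewrite fx subn_gt0.
  have [pR pf _] := par_spec _ xR fx0.
  by rewrite iterS pR pf fx subnS.
have iter_v : forall w, w \in R -> iter (f w) par w = v.
  move=> w wR; have [xR fx] := iter_spec w wR (f w) (leqnn _).
  by apply: f0 => //; rewrite fx subnn.
have tR : forall i, t i \in R by move=> i; exact: Ht.
pose VT := v |: \bigcup_(i < p) [set iter (val m) par (t i) | m : 'I_(f (t i))].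
have VTP : forall w, reflect (w = v \/ exists i m, m < f (t i) /\ w = iter m par (t i))
    (w \in VT).
  move=> w; apply: (iffP setU1P) => [[->|/bigcupP [i _ /imsetP [m _ ->]]]|[->|[i [m [lt ->]]]]].
  - by left.
  - by right; exists i, m; split.
  - by left.
  - right; apply/bigcupP; exists i => //; apply/imsetP; by exists (Ordinal lt).
have VT_R : forall w, w \in VT -> w \in R.
  move=> w /VTP [->|[i [m [lt ->]]]].
    apply: (inR v 0) => //; by rewrite /Nv /nbhd_iter /= in_set1.
  by have [] := iter_spec _ (tR i) m (ltnW lt).
have VT_par : forall w, w \in VT -> w != v ->
    [/\ par w \in VT, 0 < f w, f (par w) = (f w).-1 & e (par w) w].
  move=> w wV wv.
  have wR := VT_R w wV.
  have fw0 : 0 < f w.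
    rewrite lt0n; apply/negP => /eqP fw; move/negP: wv; apply; apply/eqP; exact: f0.
  have [pR pf pe] := par_spec w wR fw0.
  split => //.
  move/VTP: wV => [wv'|[i [m [lt wE]]]]; first by move: wv; rewrite wv' eqxx.
  apply/VTP; rewrite wE -iterS.
  case: (ltnP m.+1 (f (t i))) => [lt2|ge].
    by right; exists i, m.+1.
  left; have -> : m.+1 = f (t i) by apply/eqP; rewrite eqn_leq ge lt.
  exact: iter_v.
pose ET := [set [set w; par w] | w in VT :\ v].
have tsym : symmetric (tadj ET).
  move=> x y; rewrite /tadj eq_sym; congr (_ && _).
  by rewrite /= setUC.
have tedge : forall w, w \in VT -> w != v -> tadj ET (par w) w.
  move=> w wV wv; have [_ fw0 pf _] := VT_par w wV wv.
  rewrite /tadj; apply/andP; split.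
    apply/eqP => E; move: pf; rewrite E => H.
    exact: (predn_neq fw0 (esym H)).
  rewrite setUC; apply: imset_f; by rewrite in_setD1 wv.
have tinv : forall x y, tadj ET x y -> exists w,
    [/\ w \in VT, w != v & (x = w /\ y = par w) \/ (x = par w /\ y = w)].
  move=> x y /andP [xy /imsetP [w]]; rewrite in_setD1 => /andP [wv wV] E.
  exists w; split => //.
  have xin : x \in [set w; par w] by rewrite -E set21.
  have yin : y \in [set w; par w] by rewrite -E set22.
  move/set2P: xin => [Ex|Ex]; move/set2P: yin => [Ey|Ey]; rewrite Ex Ey in xy *.
  - by move: xy; rewrite eqxx.
  - by left.
  - by right.
  - by move: xy; rewrite eqxx.
have paths : forall k w, w \in VT -> f w = k ->
    exists s, [/\ path (tadj ET) v s, last v s = w & size s = k].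
  elim=> [|k IH] w wV fw.
    exists [::]; split => //=; symmetry; apply: f0 => //; exact: VT_R.
  have wv : w != v by apply/eqP => E; move: fw; rewrite E fv.
  have [pV _ pf _] := VT_par w wV wv.
  have [s [ps ls ss]] := IH (par w) pV ltac:(by rewrite pf fw).
  exists (rcons s w); split.
  - by rewrite rcons_path ps ls tedge.
  - by rewrite last_rcons.
  - by rewrite size_rcons ss.
have vV : v \in VT by apply/VTP; left.
exists VT, ET; split.
- move=> E /imsetP [w]; rewrite in_setD1 => /andP [wv wV] ->.
  have [pV fw0 pf pe] := VT_par w wV wv.
  exists w, (par w); split => //.
  + apply/eqP => Ex; move: pf; rewrite -Ex => H.
    exact: (predn_neq fw0 (esym H)).
  + by rewrite se.
- split.
  + by apply/set0Pn; exists v.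
  + have cv : forall x, x \in VT -> connect (tadj ET) v x.
      move=> x xV; have [s [ps ls _]] := paths _ x xV erefl.
      apply/connectP; by exists s.
    move=> x y xV yV; apply: connect_trans (cv y yV).
    by rewrite (sym_connect_sym tsym) cv.
  + move=> c uc sc; apply/negP => cc.
    case: c uc sc cc => [|x0 c'] // uc sc cc.
    set c := x0 :: c' in uc sc cc *.
    have x0c : x0 \in c by rewrite mem_head.
    case: (@arg_maxnP V x0 (fun x => x \in c) f x0c) => x xc xmax.
    have Hn := next_cycle cc xc.
    have Hp := prev_cycle cc xc.
    have nc : next c x \in c by rewrite mem_next.
    have pc : prev c x \in c by rewrite mem_prev.
    have E1 : next c x = par x.
      have [w [wV wv [[ex ey]|[ex ey]]]] := tinv _ _ Hn; first by rewrite ey ex.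
      have [_ fw0 pf _] := VT_par w wV wv.
      have := xmax _ nc; rewrite ey ex pf.
      move=> H; have H' : f w <= (f w).-1 := H.
      by move: H'; rewrite leqNgt ltn_predL fw0.
    have E2 : prev c x = par x.
      have [w [wV wv [[ex ey]|[ex ey]]]] := tinv _ _ Hp; last by rewrite ex ey.
      have [_ fw0 pf _] := VT_par w wV wv.
      have := xmax _ pc; rewrite ex ey pf.
      move=> H; have H' : f w <= (f w).-1 := H.
      by move: H'; rewrite leqNgt ltn_predL fw0.
    by have := next_neq_prev uc xc sc; rewrite E1 E2 eqxx.
- split => // w wV.
  have [s [ps ls ss]] := paths _ w wV erefl.
  exists s; split => //; rewrite ss; by have [] := fR w (VT_R w wV).
- rewrite cardsU1; apply: leq_add; first by case: (v \notin _).
  apply: leq_trans (@card_bigcup_le V _ _ _ _) _.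
  apply: (@leq_trans (\sum_(i < p) K)).
    apply: leq_sum => i _.
    apply: leq_trans (leq_imset_card _ _) _.
    rewrite card_ord; by have [] := fR _ (tR i).
  by rewrite big_const_ord iter_addn_0 mulnC.
- move=> i; apply/VTP.
  case: (posnP (f (t i))) => [fz|fp].
    by left; apply: f0.
  by right; exists i, 0.
Qed.

Lemma INR_subn m n : m <= n -> INR (n - m) = (INR n - INR m)%R.
Proof. move=> H; rewrite -{2}(subnK H) plus_INR; ring. Qed.

Lemma INR_lt m n : m < n -> (INR m < INR n)%R.
Proof. by move/ltP; apply: lt_INR. Qed.

Theorem lemma11 (V : finType) (e : rel V) (p : nat) (A : 'I_p -> {set V})
    (l delta : nat) :
  simple_graph e ->
  2 <= #|V| ->
  1 <= p ->
  1 <= l ->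
  (forall i, A i != set0) ->
  (exists (VT : {set V}) (ET : {set {set V}}),
      [/\ subgraph_of e VT ET, is_tree VT ET,
          tree_depth_le VT ET (4 * INR delta * INR l * ln (INR #|V|))%R,
          (INR #|VT| <= 4 * INR delta * INR l * INR p * ln (INR #|V|))%R
        & forall i, ~~ [disjoint VT & A i]])
  \/
  (exists S : {set V},
      (INR #|nbhd_iter e delta S :&: ~: S| < INR (minn #|S| #|~: S|) / INR l)%R /\
      (INR #|nbhd_iter e delta (~: S) :&: S| < INR (minn #|S| #|~: S|) / INR l)%R).
Proof.
move=> [se ie] n2 p1 l1 Ane.
have lR : (1 <= INR l)%R by have := le_INR' l1.
have [v _] : exists v : V, v \in V.
  have : 0 < #|V| by apply: leq_trans n2.
  by move/card_gt0P => [x _]; exists x.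
have minpos : forall S : {set V}, 0 < #|S| -> #|S| < #|V| ->
    (0 < INR (minn #|S| #|~: S|) / INR l)%R.
  move=> S S0 Sn.
  have cS : #|~: S| = #|V| - #|S| by rewrite -(cardsC S) addKn.
  have m1 : 1 <= minn #|S| #|~: S| by rewrite leq_min S0 cS subn_gt0.
  have := le_INR' m1 => /= h.
  apply: Rdiv_lt_0_compat; lra.
case: (posnP delta) => [d0|dpos].
  right; exists [set v].
  rewrite d0 /nbhd_iter /= setICr setIC setICr cards0 /=.
  have := minpos [set v]; rewrite cards1 => /(_ isT n2) h; split; exact: h.
case: (classic (exists S : {set V},
      (INR #|nbhd_iter e delta S :&: ~: S| < INR (minn #|S| #|~: S|) / INR l)%R /\
      (INR #|nbhd_iter e delta (~: S) :&: S| < INR (minn #|S| #|~: S|) / INR l)%R))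
  => [HS|HS]; first by right.
left.
have key : forall S : {set V}, 0 < #|S| -> #|S| < #|V| ->
   (INR (minn #|S| #|~: S|) / INR l <= INR #|nbhd_iter e delta S :&: ~: S|)%R \/
   (INR (minn #|S| #|~: S|) / INR l <= INR #|nbhd_iter e delta (~: S) :&: S|)%R.
  move=> S S0 Sn.
  case: (Rlt_le_dec (INR #|nbhd_iter e delta S :&: ~: S|) (INR (minn #|S| #|~: S|) / INR l))
    => [h1|h1]; last by left.
  case: (Rlt_le_dec (INR #|nbhd_iter e delta (~: S) :&: S|) (INR (minn #|S| #|~: S|) / INR l))
    => [h2|h2]; last by right.
  by exfalso; apply: HS; exists S.
pose B u j := nbhd_iter e (j * delta) [set u].
pose a u j := #|B u j|.
have B_S : forall u j, B u j.+1 = nbhd_iter e delta (B u j).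
  by move=> u j; rewrite /B mulSn Nk_add.
have B_sub : forall u j, B u j \subset B u j.+1.
  by move=> u j; rewrite B_S; apply: Nk_sub.
have a0 : forall u, a u 0 = 1 by move=> u; rewrite /a /B mul0n /nbhd_iter /= cards1.
have uB : forall u j, u \in B u j.
  by move=> u j; apply: (subsetP (Nk_sub _ _ _)); rewrite in_set1.
have aS0 : forall u j, 0 < a u j by move=> u j; apply/card_gt0P; exists u.
have an : forall u j, a u j <= #|V| by move=> u j; apply: max_card.
have amono : forall u j, a u j <= a u j.+1 by move=> u j; apply: subset_leq_card.
have stab : forall u j, a u j < #|V| -> a u j < a u j.+1.
  move=> u j lt; rewrite ltnNge; apply/negP => le.
  have EB : B u j.+1 = B u j.
    apply/eqP; rewrite eq_sym eqEcard B_sub; exact: le.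
  have := key (B u j) (aS0 u j) lt.
  have sub0 : nbhd_iter e delta (B u j) :&: ~: B u j = set0 by rewrite -B_S EB setICr.
  have sub1 : nbhd_iter e delta (~: B u j) :&: B u j = set0.
    apply/eqP; rewrite -subset0 -(setDv (B u j)).
    apply: (@inner_sub V e delta (B u j) (B u j) se).
    by rewrite -B_S EB.
  rewrite sub0 sub1 cards0 /=.
  have := minpos _ (aS0 u j) lt; lra.
have a1 : forall u, 2 <= a u 1.
  by move=> u; have := stab u 0; rewrite a0; apply; apply: leq_trans n2.
have areach : forall u j, j < a u j \/ a u j = #|V|.
  move=> u; elim=> [|j IH]; first by left; rewrite a0.
  case: (ltnP (a u j) #|V|) => [lt|ge].
    have := stab u j lt; case: IH => [h|h]; last by rewrite h ltnn in lt.
    by move=> h2; left; exact: leq_ltn_trans h h2.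
  right; apply/eqP; rewrite eqn_leq an /=; apply: leq_trans ge (amono u j).
have afull : forall u, a u #|V| = #|V|.
  move=> u; case: (areach u #|V|) => // h; by have := an u #|V|; rewrite leqNgt h.
have divle : forall x y, (x / INR l <= y)%R -> (x <= INR l * y)%R.
  move=> x y h.
  have := Rmult_le_compat_l (INR l) _ _ ltac:(lra) h.
  have -> : (INR l * (x / INR l) = x)%R by field; lra.
  done.
have constr : forall u j, 1 <= j -> 2 * a u j <= #|V| ->
    (INR (a u j) <= INR l * (INR (a u j.+1) - INR (a u j)))%R \/
    (INR (a u j) <= INR l * (INR (a u j) - INR (a u j.-1)))%R.
  move=> u j j1 h2.
  have ltn : a u j < #|V|.
    apply: leq_trans h2; rewrite mul2n -addnn -addn1 leq_add2l; exact: aS0.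
  have cC : #|~: B u j| = #|V| - a u j by rewrite -(cardsC (B u j)) addKn.
  have mE : minn (a u j) #|~: B u j| = a u j.
    apply/minn_idPl; rewrite cC leq_subRL ?an // addnn -mul2n //.
  have X1 : #|nbhd_iter e delta (B u j) :&: ~: B u j| = a u j.+1 - a u j.
    by rewrite -B_S -setDE cardsDS // B_sub.
  have BjE : nbhd_iter e delta (B u j.-1) = B u j by rewrite -B_S prednK.
  have X2 : #|nbhd_iter e delta (~: B u j) :&: B u j| <= a u j - a u j.-1.
    apply: leq_trans (subset_leq_card (@inner_sub V e delta (B u j) (B u j.-1) se _)) _.
      by rewrite BjE.
    rewrite cardsDS //; have := B_sub u j.-1; by rewrite prednK.
  have am1 : a u j.-1 <= a u j by have := amono u j.-1; rewrite prednK.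
  have := key (B u j) (aS0 u j) ltn; rewrite mE X1 => [[h|h]].
    left; apply: divle; rewrite -INR_subn //; exact: amono.
  right; apply: divle; rewrite -INR_subn //.
  apply: Rle_trans h _; exact: le_INR' X2.
have [c1 c2 cl cl2] := cc_props l1.
have grow : forall u M, (forall j, j < M -> 2 * a u j <= #|V|) ->
    forall m, m <= M -> (cc l ^ m <= INR (a u m))%R.
  move=> u M HM; apply: (@growth (a u) l (cc l) M) => //; try exact: a0; try exact: a1; try exact: amono.
  move=> j j1 jM; apply: constr => //; exact: HM.
have exP : exists j, #|V| < 2 * a v j.
  exists #|V|; rewrite afull mul2n -addnn -{1}[#|V|]addn0 ltn_add2l; exact: leq_trans n2.
case: (ex_minnP exP) => h Ph hmin.
have h1 : 1 <= h.
  rewrite lt0n; apply/negP => /eqP h0; move: Ph; rewrite h0 a0 muln1 ltnNge n2 //.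
have Hh : (cc l ^ h.-1 * 2 <= INR #|V|)%R.
  have hle : 2 * a v h.-1 <= #|V|.
    rewrite leqNgt; apply/negP => H; have := hmin _ H; rewrite -ltnS prednK // ltnn //.
  have HM : forall j, j < h.-1 -> 2 * a v j <= #|V|.
    move=> j jh; rewrite leqNgt; apply/negP => H.
    have := hmin _ H; rewrite leqNgt.
    by rewrite (ltn_trans jh) // -ltnS prednK.
  have H2 := grow v h.-1 HM h.-1 (leqnn _).
  have := le_INR' hle; rewrite mult_INR /= => H1.
  lra.
pose t i := odflt v [pick x in A i].
have tin : forall i, t i \in A i.
  move=> i; rewrite /t; case: pickP => //= none.
  have [x xA] := set0Pn _ (Ane i); by move: (none x); rewrite /= xA.
have exQ : forall i, exists j, #|V| <= 2 * a (t i) j.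
  by move=> i; exists #|V|; rewrite afull leq_pmull.
pose g i := ex_minn (exQ i).
have gspec : forall i, #|V| <= 2 * a (t i) (g i) /\
    forall k, #|V| <= 2 * a (t i) k -> g i <= k.
  by move=> i; rewrite /g; case: (ex_minnP (exQ i)).
have Hg : forall i, g i = 0 \/ (1 <= g i /\ (cc l ^ (g i).-1 * 2 <= INR #|V| - 1)%R).
  move=> i; have [gP gmin] := gspec i.
  case: (posnP (g i)) => [->|gp]; first by left.
  right; split => //.
  have glt : 2 * a (t i) (g i).-1 < #|V|.
    rewrite ltnNge; apply/negP => H; have := gmin _ H.
    by rewrite -ltnS prednK // ltnn.
  have HM : forall j, j < (g i).-1 -> 2 * a (t i) j <= #|V|.
    move=> j jg; rewrite leqNgt; apply/negP => H.
    have H' : #|V| <= 2 * a (t i) j by apply: ltnW.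
    have := gmin _ H'; rewrite leqNgt.
    by rewrite (ltn_trans jg) // -ltnS prednK.
  have H2 := grow (t i) (g i).-1 HM (g i).-1 (leqnn _).
  have glt' : 2 * a (t i) (g i).-1 <= #|V| - 1 by lia.
  have := le_INR' glt'; rewrite mult_INR INR_subn; last by lia.
  rewrite /= => H1; lra.
have dist : forall i, t i \in nbhd_iter e ((h + g i) * delta) [set v].
  move=> i; have [gP _] := gspec i.
  have [w] : exists w, w \in B v h :&: B (t i) (g i).
    apply/set0Pn; apply/negP => /eqP E.
    have := cardsU (B v h) (B (t i) (g i)); rewrite E cards0 subn0.
    have := max_card (B v h :|: B (t i) (g i)).
    rewrite -/(a v h) -/(a (t i) (g i)). lia.
  rewrite inE => /andP [wv wt].
  have tw := Nk_sym se wt.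
  rewrite mulnDl addnC Nk_add.
  apply: (subsetP (@Nk_mono _ e (g i * delta) [set w] _ _)) tw.
  by rewrite sub1set.
pose i0 : 'I_p := Ordinal p1.
case: (@arg_maxnP _ i0 xpredT g isT) => imax _ gmax.
pose G := g imax.
pose K := (h + G) * delta.
have Ht : forall i, t i \in nbhd_iter e K [set v].
  move=> i; apply: (subsetP (Nk_le _ _ _)) (dist i).
  rewrite /K leq_mul2r leq_add2l; apply/orP; right; exact: (gmax i isT).
have [VT [ET [Hsub Htree [vV Hdepth] Hcard HtV]]] := @tree_exists V e p K v t se ie p1 Ht.
have NB := num_bound n2 l1 h1 Hh (Hg imax).
have dR : (1 <= INR delta)%R by have := le_INR' dpos.
have pR : (1 <= INR p)%R by have := le_INR' p1.
have KR : (INR K = INR (h + G) * INR delta)%R by rewrite /K mult_INR.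
exists VT, ET; split => //.
- exists v => // w wV.
  have [s [ps ls ss]] := Hdepth w wV.
  exists s; split => //.
  apply: Rle_trans (le_INR' ss) _; rewrite KR /G.
  have := Rmult_le_compat_r _ _ _ (pos_INR delta) NB; nra.
- apply: Rle_trans (le_INR' Hcard) _.
  rewrite plus_INR mult_INR KR /G /=.
  have H1 := Rmult_le_compat_r _ _ _ (pos_INR delta) NB.
  have H2 := Rmult_le_compat_l _ _ _ (pos_INR p) H1.
  have H3 : (1 <= INR p * INR delta)%R by nra.
  set X := INR (h + g imax) in H2 *; set L := ln (INR #|V|) in H2 *; set P := INR p in H2 H3 *; set D := INR delta in H2 H3 *; set LL := INR l in H2 *. nra.
- move=> i; apply/negP => D; have := disjointFr D (HtV i); by rewrite tin.
Qed.
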